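(* Let $G_{\mathrm{vc}}=(V_{\mathrm{vc}},E_{\mathrm{vc}})$ be a vertex-capacitated graph with node-weighting $A_{\mathrm{vc}}$, and let $G_{\mathrm{ec}}=(V_{\mathrm{ec}},E_{\mathrm{ec}})$ be the corresponding directed edge-capacitated graph with node-weighting $A_{\mathrm{ec}}$. Then for all $h,s,\phi$: (1) If $A_{\mathrm{vc}}$ is $(h,s)$-length $\phi$-expanding in $G_{\mathrm{vc}}$, then $A_{\mathrm{ec}}$ is $(h,s)$-length $\phi$-expanding in $G_{\mathrm{ec}}$. (2) If $A_{\mathrm{ec}}$ is $(h,s)$-length $\phi$-expanding in $G_{\mathrm{ec}}$, then $A_{\mathrm{vc}}$ is $(h,s)$-length $\frac{\phi}{3}$-expanding in $G_{\mathrm{vc}}$.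
   Context: Vertex-capacitated graph: finite undirected graph with positive integer lengths $\ell$ and capacities $u$ on vertices and edges; path length sums vertex and edge lengths. Corresponding directed graph: for each $v\in V_{\mathrm{vc}}$, add vertices $v_{\mathrm{in}},v_{\mathrm{mid}},v_{\mathrm{out}}$ and directed edges $(v_{\mathrm{in}},v_{\mathrm{mid}}),(v_{\mathrm{mid}},v_{\mathrm{out}}),(v_{\mathrm{in}},v_{\mathrm{out}})$, each with length $\ell(v)$ and capacity $u(v)$; for each edge $e=\{u,v\}\in E_{\mathrm{vc}}$ add directed edges $(u_{\mathrm{out}},v_{\mathrm{in}})$ and $(v_{\mathrm{out}},u_{\mathrm{in}})$ with length $\ell(e)$ and capacity $u(e)$; set $A_{\mathrm{ec}}(v_{\mathrm{mid}})=A_{\mathrm{vc}}(v)$ and $A_{\mathrm{ec}}=0$ on all other vertices. General notions: node-weighting $A\ge0$; demand $D:V\times V\to\mathbb{R}_{\ge0}$; $A$-respecting: $\max\{\sum_wD(v,w),\sum_wD(w,v)\}\le A(v)$; $h$-length: $D(v,w)>0\Rightarrow\mathrm{dist}(v,w)\le h$; symmetric: $D(v,w)=D(w,v)$. An $H$-length moving cut assigns to each edge (and, in a vertex-capacitated graph, also each vertex) $x$ a value $C(x)\in\{0,\tfrac1H,\dots\}\cap[0,1]$; $|C|=\sum_xu(x)C(x)$; $G-C$ has lengths $\ell(x)+H\cdot C(x)$; $\mathrm{sep}_{h'}(C,D)=\sum_{(u,v):\mathrm{dist}_{G-C}(u,v)>h'}D(u,v)$; $\mathrm{spars}_{h'}(C,D)=|C|/\mathrm{sep}_{h'}(C,D)$.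 For an $hs$-length moving cut $C$, $\mathrm{spars}_{(h,s)}(C,A)=\min\mathrm{spars}_{hs}(C,D)$ over $A$-respecting $h$-length demands $D$ — required to be symmetric in the directed graph $G_{\mathrm{ec}}$, arbitrary in $G_{\mathrm{vc}}$ (zero separation counts as $+\infty$). $A$ is $(h,s)$-length $\phi$-expanding if $\mathrm{spars}_{(h,s)}(C,A)\ge\phi$ for every $hs$-length moving cut $C$. *)

(* Defs.v *)
From HB Require Import structures.
From mathcomp Require Import all_boot all_order all_algebra.
From mathcomp Require Import boolp.
Set Implicit Arguments. Unset Strict Implicit. Unset Printing Implicit Defensive.
Import Order.TTheory GRing.Theory Num.Theory.
Local Open Scope ring_scope.

Section Generic.
Variable R : realFieldType.

Definition is_moving_cut (X : finType) (H : nat) (C : X -> R) : Prop :=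
  forall x, exists k : nat, (k <= H)%N /\ C x = k%:R / H%:R.

Section Digraph.
Variables (X F : finType) (tl hd : F -> X) (len cap : F -> nat).

Fixpoint dwalk (x y : X) (p : seq F) : bool :=
  match p with
  | [::] => x == y
  | f :: p' => (tl f == x) && dwalk (hd f) y p'
  end.

Definition dpathlen (l : F -> R) (p : seq F) : R := \sum_(f <- p) l f.

(* dist_l(x,y) <= b  and  dist_l(x,y) > b  (dist = +oo if unreachable) *)
Definition ddist_le (l : F -> R) (x y : X) (b : R) : Prop :=
  exists p, dwalk x y p /\ dpathlen l p <= b.
Definition ddist_gt (l : F -> R) (x y : X) (b : R) : Prop :=
  forall p, dwalk x y p -> b < dpathlen l p.

Definition d_len (f : F) : R := (len f)%:R.
Definition d_cut_len (H : nat) (C : F -> R) (f : F) : R := (len f)%:R + H%:R * C f.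

Definition d_cut_size (C : F -> R) : R := \sum_(f : F) (cap f)%:R * C f.

Definition d_sep (H : nat) (C : F -> R) (h' : R) (D : X -> X -> R) : R :=
  \sum_(x : X) \sum_(y : X)
     (if `[< ddist_gt (d_cut_len H C) x y h' >] then D x y else 0).

Definition d_respecting (A : X -> R) (D : X -> X -> R) : Prop :=
  forall x, Num.max (\sum_(y : X) D x y) (\sum_(y : X) D y x) <= A x.

Definition d_hlength (h : nat) (D : X -> X -> R) : Prop :=
  forall x y, 0 < D x y -> ddist_le d_len x y h%:R.

Definition d_expanding (h s : nat) (phi : R) (A : X -> R) : Prop :=
  forall C : F -> R, is_moving_cut (h * s) C ->
  forall D : X -> X -> R,
    (forall x y, 0 <= D x y) ->
    (forall x y, D x y = D y x) ->
    d_respecting A D -> d_hlength h D ->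
    0 < d_sep (h * s) C (h * s)%:R D ->
    phi <= d_cut_size C / d_sep (h * s) C (h * s)%:R D.

End Digraph.

(* ends e = the two endpoints of e (unordered).                       *)
Section VCGraph.
Variables (V E : finType) (ends : E -> V * V)
          (lenV capV : V -> nat) (lenE capE : E -> nat).

Definition joins (e : E) (x y : V) : bool :=
  ((ends e).1 == x) && ((ends e).2 == y) || ((ends e).1 == y) && ((ends e).2 == x).

(* a walk from x to y: x, (e1,x1), ..., (ek,xk) with xk = y *)
Fixpoint vwalk (x y : V) (p : seq (E * V)) : bool :=
  match p with
  | [::] => x == y
  | st :: p' => joins st.1 x st.2 && vwalk st.2 y p'
  end.

Definition vpathlen (l : (V + E)%type -> R) (x : V) (p : seq (E * V)) : R :=
  l (inl x) + \sum_(st <- p) (l (inr st.1) + l (inl st.2)).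

(* convention dist(x,x) = 0 *)
Definition vdist_le (l : (V + E)%type -> R) (x y : V) (b : R) : Prop :=
  x = y \/ exists p, vwalk x y p /\ vpathlen l x p <= b.
Definition vdist_gt (l : (V + E)%type -> R) (x y : V) (b : R) : Prop :=
  x <> y /\ forall p, vwalk x y p -> b < vpathlen l x p.

Definition vc_len (z : (V + E)%type) : nat :=
  match z with inl v => lenV v | inr e => lenE e end.
Definition vc_cap (z : (V + E)%type) : nat :=
  match z with inl v => capV v | inr e => capE e end.

Definition v_len (z : (V + E)%type) : R := (vc_len z)%:R.
Definition v_cut_len (H : nat) (C : (V + E)%type -> R) (z : (V + E)%type) : R :=
  (vc_len z)%:R + H%:R * C z.

Definition v_cut_size (C : (V + E)%type -> R) : R :=
  \sum_(z : (V + E)%type) (vc_cap z)%:R * C z.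

Definition v_sep (H : nat) (C : (V + E)%type -> R) (h' : R) (D : V -> V -> R) : R :=
  \sum_(x : V) \sum_(y : V)
     (if `[< vdist_gt (v_cut_len H C) x y h' >] then D x y else 0).

Definition v_respecting (A : V -> R) (D : V -> V -> R) : Prop :=
  forall x, Num.max (\sum_(y : V) D x y) (\sum_(y : V) D y x) <= A x.

Definition v_hlength (h : nat) (D : V -> V -> R) : Prop :=
  forall x y, 0 < D x y -> vdist_le v_len x y h%:R.

Definition v_expanding (h s : nat) (phi : R) (A : V -> R) : Prop :=
  forall C : (V + E)%type -> R, is_moving_cut (h * s) C ->
  forall D : V -> V -> R,
    (forall x y, 0 <= D x y) ->
    v_respecting A D -> v_hlength h D ->
    0 < v_sep (h * s) C (h * s)%:R D ->
    phi <= v_cut_size C / v_sep (h * s) C (h * s)%:R D.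

(* vertex (v, 0) = v_in, (v, 1) = v_mid, (v, 2) = v_out *)
Definition k_in : 'I_3 := @Ordinal 3 0 isT.
Definition k_mid : 'I_3 := @Ordinal 3 1 isT.
Definition k_out : 'I_3 := @Ordinal 3 2 isT.

Definition ec_vertex := (V * 'I_3)%type.
(* arcs: inl (v,0) = (v_in,v_mid), inl (v,1) = (v_mid,v_out),
   inl (v,2) = (v_in,v_out); for e with ends (a,b):
   inr (e,false) = (a_out,b_in), inr (e,true) = (b_out,a_in). *)
Definition ec_arc := ((V * 'I_3) + (E * bool))%type.

Definition ec_tl (f : ec_arc) : ec_vertex :=
  match f with
  | inl (v, i) => if nat_of_ord i == 1%N then (v, k_mid) else (v, k_in)
  | inr (e, b) => if b then ((ends e).2, k_out) else ((ends e).1, k_out)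
  end.
Definition ec_hd (f : ec_arc) : ec_vertex :=
  match f with
  | inl (v, i) => if nat_of_ord i == 0%N then (v, k_mid) else (v, k_out)
  | inr (e, b) => if b then ((ends e).1, k_in) else ((ends e).2, k_in)
  end.
Definition ec_len (f : ec_arc) : nat :=
  match f with inl (v, _) => lenV v | inr (e, _) => lenE e end.
Definition ec_cap (f : ec_arc) : nat :=
  match f with inl (v, _) => capV v | inr (e, _) => capE e end.

Definition ec_A (A : V -> R) (x : ec_vertex) : R :=
  if x.2 == k_mid then A x.1 else 0.

Definition ec_expanding (h s : nat) (phi : R) (A : V -> R) : Prop :=
  d_expanding ec_tl ec_hd ec_len ec_cap h s phi (ec_A A).

End VCGraph.
End Generic.

(* Main.v *)
Require Import Defs.
From HB Require Import structures.
From mathcomp Require Import all_boot all_order all_algebra.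
From mathcomp Require Import boolp lra.
Import Order.TTheory GRing.Theory Num.Theory.
Set Implicit Arguments. Unset Strict Implicit. Unset Printing Implicit Defensive.
Local Open Scope ring_scope.

Section Walks.
Variables (R : realFieldType) (V E : finType) (ends : E -> V * V).

Lemma dwalk_cat (X F : finType) (tl hd : F -> X) x y z p q :
  dwalk tl hd x z p -> dwalk tl hd z y q -> dwalk tl hd x y (p ++ q).
Proof.
elim: p x => [|f p IH] x /=; first by move/eqP->.
by case/andP=> -> /IH H /H ->.
Qed.

Lemma dwalk_cons (X F : finType) (tl hd : F -> X) x y f p :
  dwalk tl hd x y (f :: p) = (tl f == x) && dwalk tl hd (hd f) y p.
Proof. by []. Qed.

Lemma joins_sym e x y : joins ends e x y -> joins ends e y x.
Proof. by rewrite /joins orbC. Qed.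

Lemma joins_arc e x y : joins ends e x y ->
  exists b, ec_tl ends (inr (e,b)) = (x,k_out) /\ ec_hd ends (inr (e,b)) = (y,k_in).
Proof.
rewrite /joins => /orP[/andP[/eqP H1 /eqP H2]|/andP[/eqP H1 /eqP H2]];
  [exists false | exists true]; by rewrite /= H1 H2.
Qed.

Definition ord2 : 'I_3 := @Ordinal 3 2 isT.

Lemma lift_aux (lec : ec_arc V E -> R) (lvc : (V + E)%type -> R)
  (Hv : forall v i, lec (inl (v,i)) <= lvc (inl v))
  (He : forall e b, lec (inr (e,b)) <= lvc (inr e)) p :
  forall u w, vwalk ends u w p -> p != [::] ->
  exists q, dwalk (ec_tl ends) (ec_hd ends) (w,k_out) (u,k_in) q /\
   dpathlen lec q + lvc (inl w) <= \sum_(st <- p) (lvc (inr st.1) + lvc (inl st.2)).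
Proof.
elim: p => [//|[e x] p IH] u w /= /andP[J W] _.
have [b [Ht Hh]] := joins_arc (joins_sym J).
case: p IH W => [|st p] IH W.
- move/eqP: W => <-. exists [:: inr (e,b)]; split.
    by rewrite dwalk_cons Ht Hh /= !eqxx.
  rewrite /dpathlen !big_cons !big_nil /=. have := He e b. lra.
- have [q [Hq Hl]] := IH x w W isT.
  exists (q ++ [:: inl (x, ord2); inr (e,b)]); split.
    apply: dwalk_cat Hq _. by rewrite !dwalk_cons Ht Hh /= !eqxx.
  move: Hl; rewrite /dpathlen big_cat /= !big_cons big_nil /=.
  have := Hv x ord2; have := He e b. lra.
Qed.

Lemma lift_walk (lec : ec_arc V E -> R) (lvc : (V + E)%type -> R)
  (Hv : forall v i, lec (inl (v,i)) <= lvc (inl v))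
  (He : forall e b, lec (inr (e,b)) <= lvc (inr e))
  (H0 : forall z, 0 <= lvc z) u w p :
  vwalk ends u w p ->
  exists q, dwalk (ec_tl ends) (ec_hd ends) (w,k_mid) (u,k_mid) q /\
   dpathlen lec q <= vpathlen lvc u p.
Proof.
case: p => [|st p] W.
  move: W => /= /eqP ->. exists [::]; split; first by rewrite /= eqxx.
  by rewrite /dpathlen /vpathlen !big_nil addr0.
have [q [Hq Hl]] := lift_aux Hv He W isT.
exists (inl (w, k_mid) :: q ++ [:: inl (u, k_in)]); split.
  rewrite /= eqxx /=. apply: dwalk_cat Hq _. by rewrite /= !eqxx.
move: Hl; rewrite /dpathlen /vpathlen !big_cons big_cat !big_cons big_nil /=.
have := Hv w k_mid; have := Hv u k_in. lra.
Qed.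

Lemma tl_inl v i : (ec_tl ends (inl (v,i))).1 = v /\ (ec_tl ends (inl (v,i))).2 != k_out.
Proof. by rewrite /=; case: ifP. Qed.
Lemma hd_inl v i : (ec_hd ends (inl (v,i))).1 = v.
Proof. by rewrite /=; case: ifP. Qed.
Lemma inr_facts e b : (ec_tl ends (inr (e,b))).2 = k_out /\ (ec_hd ends (inr (e,b))).2 = k_in /\
  joins ends e (ec_tl ends (inr(e,b))).1 (ec_hd ends (inr (e,b))).1.
Proof. by case: b; rewrite /joins /= !eqxx ?orbT. Qed.

Lemma proj_aux (lec : ec_arc V E -> R) (lvc : (V + E)%type -> R)
  (Hv : forall v i, lvc (inl v) <= lec (inl (v,i)))
  (He : forall e b, lvc (inr e) <= lec (inr (e,b)))
  (H0 : forall z, 0 <= lvc z) (H1 : forall f, 0 <= lec f) w q :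
  forall x, dwalk (ec_tl ends) (ec_hd ends) x (w,k_mid) q ->
  x = (w,k_mid) \/ exists p, vwalk ends x.1 w p /\
    (if x.2 == k_out then 0 else lvc (inl x.1)) +
      \sum_(st <- p) (lvc (inr st.1) + lvc (inl st.2)) <= dpathlen lec q.
Proof.
have P0 : forall q, 0 <= dpathlen lec q.
  by move=> q'; rewrite /dpathlen; apply: sumr_ge0.
elim: q => [|f q IH] x /=; first by move/eqP->; left.
case/andP => /eqP Ht /IH Hr; right.
rewrite /dpathlen big_cons -/(dpathlen lec q).
case: f Ht Hr => [[v i]|[e b]] Ht Hr.
- have [T1 T2] := tl_inl v i. have T3 := hd_inl v i.
  rewrite -Ht T1 (negbTE T2).
  case: Hr => [Hx|[p [Wp Hp]]].
    exists [::]; split; first by rewrite /= -T3 Hx.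
    rewrite big_nil addr0. have := Hv v i; have := P0 q. lra.
  exists p; split; first by rewrite -T3.
  move: Hp; rewrite T3.
  have := Hv v i; have := H0 (inl v).
  case: ifP => _; lra.
- have [T1 [T2 T3]] := inr_facts e b.
  rewrite -Ht T1 eqxx.
  case: Hr => [Hx|[p [Wp Hp]]].
    by move: T2; rewrite Hx.
  exists ((e, (ec_hd ends (inr (e, b))).1) :: p); split.
    by rewrite /= T3 Wp.
  move: Hp; rewrite T2 big_cons /=.
  have := He e b. lra.
Qed.

Lemma proj_walk (lec : ec_arc V E -> R) (lvc : (V + E)%type -> R)
  (Hv : forall v i, lvc (inl v) <= lec (inl (v,i)))
  (He : forall e b, lvc (inr e) <= lec (inr (e,b)))
  (H0 : forall z, 0 <= lvc z) (H1 : forall f, 0 <= lec f) v w q :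
  dwalk (ec_tl ends) (ec_hd ends) (v,k_mid) (w,k_mid) q ->
  v = w \/ exists p, vwalk ends v w p /\ vpathlen lvc v p <= dpathlen lec q.
Proof.
move/(proj_aux Hv He H0 H1) => [[->]|[p [Wp Hp]]]; first by left.
by right; exists p.
Qed.

Definition lift_len (lvc : (V + E)%type -> R) (f : ec_arc V E) : R :=
  match f with inl (v, _) => lvc (inl v) | inr (e, _) => lvc (inr e) end.

Lemma rev_walk (lvc : (V + E)%type -> R) (H0 : forall z, 0 <= lvc z) u w p :
  vwalk ends u w p ->
  exists p', vwalk ends w u p' /\ vpathlen lvc w p' <= vpathlen lvc u p.
Proof.
move=> W.
have [q [Wq Hq]] := @lift_walk (lift_len lvc) lvc (fun _ _ => lexx _) (fun _ _ => lexx _) H0 u w p W.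
have H1 : forall f, 0 <= lift_len lvc f by case=> [[v i]|[e b]]; apply: H0.
have [->|[p' [W' H']]] := @proj_walk (lift_len lvc) lvc (fun _ _ => lexx _) (fun _ _ => lexx _) H0 H1 _ _ _ Wq.
  exists [::]; split; first by rewrite /=.
  rewrite /vpathlen big_nil addr0 lerDl sumr_ge0 // => st _.
  by rewrite addr_ge0.
by exists p'; split => //; apply: le_trans Hq.
Qed.

End Walks.

Section Sums.
Variable R : realFieldType.

Lemma maxor (a b : R) : Num.max a b = a \/ Num.max a b = b.
Proof. by rewrite /Order.max; case: ifP; auto. Qed.

Lemma sum_pair (I J : finType) (F : I * J -> R) :
  \sum_(x : I * J) F x = \sum_i \sum_j F (i,j).
Proof. by rewrite pair_big /=; apply: eq_bigr => -[]. Qed.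

Lemma sum_mid (V : finType) (G : V -> R) :
  \sum_(x : V * 'I_3) (if x.2 == k_mid then G x.1 else 0) = \sum_v G v.
Proof.
rewrite sum_pair; apply: eq_bigr => v _ /=.
by rewrite -big_mkcond big_pred1_eq.
Qed.

Lemma le_sum1 (I : finType) (F : I -> R) j : (forall i, 0 <= F i) -> F j <= \sum_i F i.
Proof. by move=> F0; rewrite (bigD1 j) //= lerDl sumr_ge0. Qed.

Lemma sum_mid_le (V : finType) (F : V * 'I_3 -> R) :
  (forall x, 0 <= F x) -> \sum_v F (v,k_mid) <= \sum_x F x.
Proof.
move=> F0; rewrite sum_pair; apply: ler_sum => v _.
by rewrite (bigD1 k_mid) //= lerDl sumr_ge0.
Qed.

Lemma ord3 (i : 'I_3) : i = k_in \/ i = k_mid \/ i = k_out.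
Proof.
case: i => [[|[|[|n]]] Hi]; [left|right;left|right;right|done]; exact: val_inj.
Qed.

Lemma div_mono (a a' sv se : R) : 0 <= a -> a <= a' -> 0 < se -> se <= sv ->
  a / sv <= a' / se.
Proof.
move=> a0 aa se0 ss.
have sv0 : 0 < sv by apply: lt_le_trans ss.
apply: (@le_trans _ _ (a / se)).
  apply: ler_wpM2l => //. by rewrite lef_pV2 ?posrE.
apply: ler_wpM2r => //. by rewrite invr_ge0 ltW.
Qed.

End Sums.

Lemma part1 (R : realFieldType) (V E : finType) (ends : E -> V * V)
  (lenV capV : V -> nat) (lenE capE : E -> nat) (A : V -> R) (h s : nat) (phi : R) :
  v_expanding ends lenV capV lenE capE h s phi A ->
  ec_expanding ends lenV capV lenE capE h s phi A.
Proof.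
move=> Hv C HC D D0 Dsym Dresp Dh Dsep.
set H := (h * s)%N in HC Dsep *.
have C0 : forall f, 0 <= C f.
  by move=> f; have [k [_ ->]] := HC f; rewrite divr_ge0 ?ler0n.
pose Cv (z : (V + E)%type) : R := match z with
  | inl v => Num.max (C (inl (v,k_in))) (Num.max (C (inl (v,k_mid))) (C (inl (v,k_out))))
  | inr e => Num.max (C (inr (e,false))) (C (inr (e,true))) end.
pose Dv v w := D (v,k_mid) (w,k_mid).
have HCv : is_moving_cut H Cv.
  case=> [v|e] /=.
    have [->|->] := maxor (C (inl (v,k_in))) (Num.max (C (inl (v,k_mid))) (C (inl (v,k_out)))).
      exact: HC.
    have [->|->] := maxor (C (inl (v,k_mid))) (C (inl (v,k_out))); exact: HC.
  have [->|->] := maxor (C (inr (e,false))) (C (inr (e,true))); exact: HC.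
have Cv0 : forall z, 0 <= Cv z by case=> [v|e] /=; rewrite le_max C0.
have CvC : forall v i, C (inl (v,i)) <= Cv (inl v).
  by move=> v i /=; case: (ord3 i) => [->|[->|->]]; rewrite !le_max lexx ?orbT.
have CvCe : forall e b, C (inr (e,b)) <= Cv (inr e).
  by move=> e [] /=; rewrite le_max lexx ?orbT.
have Z : forall (F : ec_vertex V -> R), (forall y, 0 <= F y) -> \sum_y F y <= 0 ->
    forall y, F y = 0.
  move=> F F0 HF y. apply: (@psumr_eq0P _ _ xpredT) => //.
  by apply/eqP; rewrite eq_le HF sumr_ge0.
have Dz : forall x y, (x.2 != k_mid) || (y.2 != k_mid) -> D x y = 0.
  move=> x y /orP[Hx|Hy].
  - have := Dresp x; rewrite /ec_A (negbTE Hx) ge_max => /andP[H1 _].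
    exact: (Z _ (D0 x) H1 y).
  - have := Dresp y; rewrite /ec_A (negbTE Hy) ge_max => /andP[_ H1].
    exact: (Z (fun x => D x y) (fun x => D0 x y) H1 x).
have lvc0 : forall z, 0 <= v_cut_len lenV lenE H Cv z.
  by move=> z; rewrite /v_cut_len addr_ge0 ?mulr_ge0.
have Key : forall v w, ddist_gt (ec_tl ends) (ec_hd ends) (d_cut_len (ec_len lenV lenE) H C)
     (v,k_mid) (w,k_mid) H%:R -> vdist_gt ends (v_cut_len lenV lenE H Cv) v w H%:R.
  move=> v w G; split.
    move=> Evw; subst w; have := G [::]; rewrite /= eqxx /dpathlen big_nil => /(_ isT).
    by rewrite ltNge ler0n.
  move=> p W.
  have [p' [W' Hp']] := rev_walk lvc0 W.
  have Hv1 : forall v' i, d_cut_len (ec_len lenV lenE) H C (inl (v',i)) <= v_cut_len lenV lenE H Cv (inl v').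
    move=> v' i; rewrite /d_cut_len /v_cut_len /= lerD2l.
    by apply: ler_wpM2l; rewrite ?ler0n ?CvC.
  have He1 : forall e b, d_cut_len (ec_len lenV lenE) H C (inr (e,b)) <= v_cut_len lenV lenE H Cv (inr e).
    move=> e b; rewrite /d_cut_len /v_cut_len /= lerD2l.
    by apply: ler_wpM2l; rewrite ?ler0n ?CvCe.
  have [q [Wq Hq]] := lift_walk Hv1 He1 lvc0 W'.
  apply: lt_le_trans (G q Wq) (le_trans Hq Hp').
pose T v w := if `[< vdist_gt ends (v_cut_len lenV lenE H Cv) v w H%:R >] then Dv v w else 0.
have Sep : d_sep (ec_tl ends) (ec_hd ends) (ec_len lenV lenE) H C H%:R D <=
           v_sep ends lenV lenE H Cv H%:R Dv.
  rewrite /d_sep /v_sep.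
  apply: (@le_trans _ _ (\sum_(x : ec_vertex V) \sum_(y : ec_vertex V)
      (if x.2 == k_mid then (if y.2 == k_mid then T x.1 y.1 else 0) else 0))).
    apply: ler_sum => -[v i] _; apply: ler_sum => -[w j] _ /=.
    case: (boolP (i == k_mid)) => Hi; last first.
      by rewrite Dz /= ?Hi //; case: ifP.
    case: (boolP (j == k_mid)) => Hj; last first.
      by rewrite Dz /= ?Hj ?orbT //; case: ifP.
    move/eqP: Hi => ->; move/eqP: Hj => ->.
    rewrite /T /Dv.
    case: asboolP => G1; case: asboolP => G2; rewrite ?lexx ?D0 //.
    by case: G2; apply: Key.
  rewrite le_eqVlt; apply/orP; left; apply/eqP. rewrite -(sum_mid (fun v => \sum_w T v w)).
  apply: eq_bigr => -[v i] _ /=.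
  case: ifP => _; last by rewrite big1.
  by rewrite -(sum_mid (T v)).
have Cut : v_cut_size capV capE Cv <= d_cut_size (ec_cap capV capE) C.
  rewrite /v_cut_size /d_cut_size !big_sumType /=.
  apply: lerD.
    rewrite sum_pair; apply: ler_sum => v _ /=.
    rewrite -mulr_sumr; apply: ler_wpM2l; first exact: ler0n.
    have L := fun j => @le_sum1 _ _ (fun i => C (inl (v,i))) j (fun i => C0 _).
    by rewrite !ge_max !L.
  rewrite sum_pair; apply: ler_sum => e _ /=.
  rewrite -mulr_sumr; apply: ler_wpM2l; first exact: ler0n.
  rewrite big_bool /= ge_max.
  have := C0 (inr (e,true)); have := C0 (inr (e,false)).
  move=> ? ?; apply/andP; split; lra.
have Hsv : 0 < v_sep ends lenV lenE H Cv H%:R Dv by apply: lt_le_trans Dsep Sep.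
have Resp : v_respecting A Dv.
  move=> v; have := Dresp (v,k_mid); rewrite /ec_A eqxx /= !ge_max => /andP[H1 H2].
  apply/andP; split.
    apply: le_trans H1. exact: (@sum_mid_le _ _ (D (v,k_mid)) (D0 _)).
  apply: le_trans H2. exact: (@sum_mid_le _ _ (fun y => D y (v,k_mid)) (fun y => D0 _ _)).
have Hlen : v_hlength ends lenV lenE h Dv.
  move=> v w /Dh [q [Wq Hq]].
  have [->|[p [Wp Hp]]] := @proj_walk _ _ _ ends (d_len R (ec_len lenV lenE)) (v_len R lenV lenE)
     (fun _ _ => lexx _) (fun _ _ => lexx _) (fun z => ler0n _ _) (fun f => ler0n _ _) _ _ _ Wq.
    by left.
  by right; exists p; split => //; apply: le_trans Hq.
have := Hv Cv HCv Dv (fun _ _ => D0 _ _) Resp Hlen Hsv.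
move/le_trans; apply.
apply: div_mono => //.
by rewrite /v_cut_size sumr_ge0 // => z _; rewrite mulr_ge0.
Qed.

Lemma part2 (R : realFieldType) (V E : finType) (ends : E -> V * V)
  (lenV capV : V -> nat) (lenE capE : E -> nat) (A : V -> R) (h s : nat) (phi : R) :
  ec_expanding ends lenV capV lenE capE h s phi A ->
  v_expanding ends lenV capV lenE capE h s (phi / 3) A.
Proof.
move=> Hec C HC D D0 Dresp Dh Dsep.
set H := (h * s)%N in HC Dsep *.
have C0 : forall z, 0 <= C z.
  by move=> z; have [k [_ ->]] := HC z; rewrite divr_ge0 ?ler0n.
pose Cec (f : ec_arc V E) : R := match f with inl (v,_) => C (inl v) | inr (e,_) => C (inr e) end.
pose Dec (x y : ec_vertex V) : R :=
  if (x.2 == k_mid) && (y.2 == k_mid) then (D x.1 y.1 + D y.1 x.1) / 2 else 0.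
have HCec : is_moving_cut H Cec by case=> [[v i]|[e b]]; exact: HC.
have Dec0 : forall x y, 0 <= Dec x y.
  by move=> x y; rewrite /Dec; case: ifP => _ //; rewrite divr_ge0 ?addr_ge0 ?ler0n.
have Decsym : forall x y, Dec x y = Dec y x by move=> x y; rewrite /Dec andbC addrC.
have Dec_nm : forall x y, (x.2 != k_mid) || (y.2 != k_mid) -> Dec x y = 0.
  by move=> x y; rewrite /Dec; case/orP => /negbTE ->; rewrite ?andbF.
have lvc0 : forall z, 0 <= v_cut_len lenV lenE H C z.
  by move=> z; rewrite /v_cut_len addr_ge0 ?mulr_ge0.
have lec0 : forall f, 0 <= d_cut_len (ec_len lenV lenE) H Cec f.
  by move=> f; rewrite /d_cut_len addr_ge0 ?mulr_ge0 //; case: f => [[v i]|[e b]]; apply: C0.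
have Hv2 : forall v i, v_cut_len lenV lenE H C (inl v) <= d_cut_len (ec_len lenV lenE) H Cec (inl (v,i)).
  by move=> v i; apply: lexx.
have He2 : forall e b, v_cut_len lenV lenE H C (inr e) <= d_cut_len (ec_len lenV lenE) H Cec (inr (e,b)).
  by move=> e b; apply: lexx.
have Key2 : forall v w, vdist_gt ends (v_cut_len lenV lenE H C) v w H%:R ->
    ddist_gt (ec_tl ends) (ec_hd ends) (d_cut_len (ec_len lenV lenE) H Cec) (v,k_mid) (w,k_mid) H%:R.
  move=> v w [Hne G] q Wq.
  have [E'|[p [Wp Hp]]] := proj_walk Hv2 He2 lvc0 lec0 Wq; first by case: Hne.
  exact: lt_le_trans (G p Wp) Hp.
have Vsym : forall v w, vdist_gt ends (v_cut_len lenV lenE H C) v w H%:R ->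
    vdist_gt ends (v_cut_len lenV lenE H C) w v H%:R.
  move=> v w [Hne G]; split; first by move=> E'; apply: Hne.
  move=> p Wp; have [p' [W' H']] := rev_walk lvc0 Wp.
  exact: lt_le_trans (G p' W') H'.
pose T' v w := if `[< ddist_gt (ec_tl ends) (ec_hd ends) (d_cut_len (ec_len lenV lenE) H Cec)
   (v,k_mid) (w,k_mid) H%:R >] then (D v w + D w v) / 2 else 0.
pose a v w := if `[< vdist_gt ends (v_cut_len lenV lenE H C) v w H%:R >] then D v w else 0.
have Sep : v_sep ends lenV lenE H C H%:R D <=
           d_sep (ec_tl ends) (ec_hd ends) (ec_len lenV lenE) H Cec H%:R Dec.
  have S1 : d_sep (ec_tl ends) (ec_hd ends) (ec_len lenV lenE) H Cec H%:R Dec =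
            \sum_v \sum_w T' v w.
    rewrite /d_sep -(sum_mid (fun v => \sum_w T' v w)); apply: eq_bigr => -[v i] _ /=.
    case: (boolP (i == k_mid)) => Hi.
      move/eqP: Hi => ->. rewrite -(sum_mid (T' v)). apply: eq_bigr => -[w j] _ /=.
      rewrite /Dec /T' /=.
      case: (j =P k_mid) => [->|Hj]; first by rewrite /= ?eqxx.
      by case: ifP.
    by rewrite big1 // => y _; rewrite Dec_nm /= ?Hi //; case: ifP.
  have S2 : \sum_v \sum_w (a v w + a w v) / 2 <= \sum_v \sum_w T' v w.
    apply: ler_sum => v _; apply: ler_sum => w _.
    rewrite /a /T' (asbool_equiv_eq (conj (@Vsym w v) (@Vsym v w))).
    case: (boolP `[< vdist_gt ends (v_cut_len lenV lenE H C) v w H%:R >]) => G1.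
      have G2 := Key2 v w (elimT (asboolP _) G1).
      by rewrite (asboolT G2).
    rewrite addr0 mul0r; case: ifP => _ //.
    by rewrite divr_ge0 ?addr_ge0 ?ler0n.
  have S3 : \sum_v \sum_w (a v w + a w v) / 2 = v_sep ends lenV lenE H C H%:R D.
    have -> : \sum_v \sum_w (a v w + a w v) / 2 = (\sum_v \sum_w (a v w + a w v)) / 2.
      by rewrite mulr_suml; apply: eq_bigr => v _; rewrite mulr_suml.
    have -> : \sum_v \sum_w (a v w + a w v) = \sum_v \sum_w a v w + \sum_v \sum_w a w v.
      by rewrite -big_split; apply: eq_bigr => v _; rewrite big_split.
    rewrite [X in _ + X]exchange_big /=.
    have -> : v_sep ends lenV lenE H C H%:R D = \sum_v \sum_w a v w by [].
    set S := \sum_v \sum_w a v w. lra.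
  by rewrite S1 -S3.
have Cut : d_cut_size (ec_cap capV capE) Cec <= 3 * v_cut_size capV capE C.
  rewrite /d_cut_size /v_cut_size !big_sumType /= !sum_pair /= mulrDr.
  apply: lerD; rewrite mulr_sumr; apply: ler_sum => x _.
    rewrite big_const_ord /=. have := C0 (inl x); have := ler0n R (capV x).
    move=> ? ?. have := mulr_ge0 (ler0n R (capV x)) (C0 (inl x)). lra.
  rewrite big_bool /=. have := mulr_ge0 (ler0n R (capE x)) (C0 (inr x)). lra.
have Hsep : 0 < d_sep (ec_tl ends) (ec_hd ends) (ec_len lenV lenE) H Cec H%:R Dec.
  exact: lt_le_trans Dsep Sep.
have SumMid : forall v, \sum_y Dec (v,k_mid) y = ((\sum_w D v w) + (\sum_w D w v)) / 2.
  move=> v; rewrite -big_split /= mulr_suml -(sum_mid (fun w => (D v w + D w v) / 2)).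
  by apply: eq_bigr => -[w j] _; rewrite /Dec /=.
have Resp : d_respecting (ec_A A) Dec.
  move=> [v i]; case: (ord3 i) => [->|[->|->]].
  - rewrite /ec_A /= ge_max !big1 ?lexx // => y _; rewrite ?Dec_nm //= ?orbT.
  - under [X in Num.max _ X]eq_bigr do rewrite Decsym.
    rewrite SumMid /ec_A /=.
    have := Dresp v; rewrite ge_max => /andP[H1 H2].
    rewrite maxxx. lra.
  - rewrite /ec_A /= ge_max !big1 ?lexx // => y _; rewrite ?Dec_nm //= ?orbT.
have Lift : forall v w p, vwalk ends w v p -> vpathlen (v_len R lenV lenE) w p <= h%:R ->
    ddist_le (ec_tl ends) (ec_hd ends) (d_len R (ec_len lenV lenE)) (v,k_mid) (w,k_mid) h%:R.
  move=> v w p Wp Hp.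
  have [q [Wq Hq]] := @lift_walk _ _ _ ends (d_len R (ec_len lenV lenE)) (v_len R lenV lenE)
     (fun _ _ => lexx _) (fun _ _ => lexx _) (fun z => ler0n _ _) _ _ _ Wp.
  by exists q; split => //; apply: le_trans Hp.
have Triv : forall v, ddist_le (ec_tl ends) (ec_hd ends) (d_len R (ec_len lenV lenE)) (v,k_mid) (v,k_mid) h%:R.
  by move=> v; exists [::]; split; rewrite /= ?eqxx // /dpathlen big_nil ler0n.
have Hlen : d_hlength (ec_tl ends) (ec_hd ends) (ec_len lenV lenE) h Dec.
  move=> [v i] [w j].
  case: (boolP ((i == k_mid) && (j == k_mid))) => Hij; last by rewrite /Dec /= (negbTE Hij) ltxx.
  case/andP: Hij => /eqP -> /eqP ->. rewrite /Dec /= => Hpos.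
  case: (boolP (0 < D v w)) => H1.
    have [E'|[p [Wp Hp]]] := Dh v w H1; first by rewrite E'.
    have [p' [W' H']] := rev_walk (fun z => ler0n R (vc_len lenV lenE z)) Wp.
    apply: (Lift _ _ p') => //. exact: le_trans H' Hp.
  have H2 : 0 < D w v by move: H1; rewrite -leNgt => H1; lra.
  have [E'|[p [Wp Hp]]] := Dh w v H2; first by rewrite E'.
  exact: (Lift _ _ p).
have := Hec Cec HCec Dec Dec0 Decsym Resp Hlen Hsep.
move=> Hphi.
have Hphi' : phi <= v_cut_size capV capE C / v_sep ends lenV lenE H C H%:R D * 3.
  apply: (le_trans Hphi).
  have -> : v_cut_size capV capE C / v_sep ends lenV lenE H C H%:R D * 3 =
            (3 * v_cut_size capV capE C) / v_sep ends lenV lenE H C H%:R D.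
    by rewrite mulrC mulrA.
  apply: div_mono => //.
  by rewrite /d_cut_size sumr_ge0 // => f _; rewrite mulr_ge0 //; case: f => [[v i]|[e b]]; apply: C0.
by rewrite ler_pdivrMr.
Qed.

Theorem theorem4p5 (R : realFieldType) (V E : finType) (ends : E -> V * V)
  (lenV capV : V -> nat) (lenE capE : E -> nat)
  (hlenV : forall v, (0 < lenV v)%N) (hlenE : forall e, (0 < lenE e)%N)
  (hcapV : forall v, (0 < capV v)%N) (hcapE : forall e, (0 < capE e)%N)
  (A : V -> R) (hA : forall v, 0 <= A v)
  (h s : nat) (hh : (0 < h)%N) (hs : (0 < s)%N) (phi : R) :
  (v_expanding ends lenV capV lenE capE h s phi A ->
     ec_expanding ends lenV capV lenE capE h s phi A) /\
  (ec_expanding ends lenV capV lenE capE h s phi A ->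
     v_expanding ends lenV capV lenE capE h s (phi / 3) A).
Proof.
split; [exact: part1 | exact: part2].
Qed.
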